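(* Let $k\ge1$, let $G$ and $H$ be simple graphs on at most $n$ vertices, and let $f_k(n)=2k\cdot4^{n^{2k}}$. Then $\hom(F,G)=\hom(F,H)$ for every underlying graph $F$ of a member of $\mathcal P_k$ if and only if $\hom(F,G)=\hom(F,H)$ for every underlying graph $F$ of a member of $\mathcal P_k$ having at most $f_k(n)$ vertices.
   Context: $\hom(F,G)$ is the number of homomorphisms $F\to G$. A $(k,k)$-bilabelled graph is $\boldsymbol F=(F,\boldsymbol u,\boldsymbol v)$, $\boldsymbol u,\boldsymbol v\in V(F)^k$, with underlying graph $F$. Series composition $\boldsymbol F\cdot\boldsymbol F'$: disjoint union with $v_i$ identified with $u'_i$, multiple edges removed, labels $(\boldsymbol u,\boldsymbol v')$. Parallel composition $\boldsymbol F\odot\boldsymbol F'$: identify $u_i$ with $u'_i$, $v_i$ with $v'_i$, multiple edges removed. For $\sigma\in\mathfrak S_{2k}$, $\boldsymbol F^\sigma$ has in-labels $(w_{\sigma(1)},\dots,w_{\sigma(k)})$, out-labels $(w_{\sigma(k+1)},\dots,w_{\sigma(2k)})$, $\boldsymbol w=\boldsymbol u\boldsymbol v$. $\mathscr C_k$ = cyclic group of rotations of $(1,\dots,k,2k,\dots,k+1)$. Bilabelled minors: via edge contraction, edge deletion, deletion of unlabelled vertices. $\boldsymbol C_k$: vertices $[2k]$, in-labels $(1,\dots,k)$, out-labels $(k+1,\dots,2k)$, edges $\{i,i+1\}$ ($i\in[2k]\setminus\{k,2k\}$), $\{1,k+1\},\{k,2k\}$; $\boldsymbol M_k$: same vertices/labels,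 edges $\{i,i+k\}$. $\mathcal Q_k^P,\mathcal Q_k^S$ = bilabelled minors of $\boldsymbol C_k,\boldsymbol M_k$; $\mathcal Q_k$ their union. $\mathcal P_k$ = smallest class containing $\mathcal Q_k$, closed under series composition, $\boldsymbol F\mapsto\boldsymbol F\odot\boldsymbol Q$ ($\boldsymbol Q\in\mathcal Q_k^P$), and $\boldsymbol F\mapsto\boldsymbol F^\sigma$ ($\sigma\in\mathscr C_k$). *)

(* Defs.v *)
From mathcomp Require Import all_boot.
Set Implicit Arguments.
Unset Strict Implicit.
Unset Printing Implicit Defensive.

Definition symr (T : finType) (r : rel T) : rel T := fun x y => r x y || r y x.

Lemma symr_sym (T : finType) (r : rel T) : symmetric (symr r).
Proof. by move=> x y; rewrite /symr orbC. Qed.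

(* vertices of the quotient: canonical representatives of the classes *)
Definition qT (T : finType) (r : rel T) : finType :=
  {x : T | root (symr r) x == x}.

Definition qproj (T : finType) (r : rel T) (x : T) : qT r :=
  exist _ (root (symr r) x)
    (@roots_root _ (symr r) (sym_connect_sym (@symr_sym T r)) x).

Definition imrel (T U : finType) (p : T -> U) (e : rel T) : rel U :=
  fun a b => [exists x, exists y, [&& e x y, p x == a & p y == b]].

Definition hom (V : finType) (E : rel V) (W : finType) (EW : rel W) : nat :=
  #|[pred f : {ffun V -> W} | [forall x, forall y, E x y ==> EW (f x) (f y)]]|.

(* A (k,k)-bilabelled graph: underlying graph (bV, bE), in-labels bin,
   out-labels bout (labels need not be distinct). *)
Record bgraph (k : nat) := BG {
  bV : finType;
  bE : rel bV;
  bin : 'I_k -> bV;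
  bout : 'I_k -> bV }.
Arguments bV {k} b.
Arguments bE {k} b.
Arguments bin {k} b.
Arguments bout {k} b.

Section Ops.
Variable k : nat.

Definition ser_rel (F F' : bgraph k) : rel (bV F + bV F') :=
  fun a b => [exists i, (a == inl (bout F i)) && (b == inr (bin F' i))].
Arguments ser_rel F F' : clear implicits.

Definition sum_rel (F F' : bgraph k) : rel (bV F + bV F') :=
  fun a b => match a, b with
             | inl x, inl y => bE F x y
             | inr x, inr y => bE F' x y
             | _, _ => false end.
Arguments sum_rel F F' : clear implicits.

Definition ser (F F' : bgraph k) : bgraph k :=
  @BG k (qT (ser_rel F F'))
     (imrel (@qproj _ (ser_rel F F')) (sum_rel F F'))
     (fun i => qproj (ser_rel F F') (inl (bin F i)))
     (fun i => qproj (ser_rel F F') (inr (bout F' i))).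

Definition par_rel (F F' : bgraph k) : rel (bV F + bV F') :=
  fun a b => [exists i, ((a == inl (bin F i)) && (b == inr (bin F' i)))
                     || ((a == inl (bout F i)) && (b == inr (bout F' i)))].
Arguments par_rel F F' : clear implicits.

Definition par (F F' : bgraph k) : bgraph k :=
  @BG k (qT (par_rel F F'))
     (imrel (@qproj _ (par_rel F F')) (sum_rel F F'))
     (fun i => qproj (par_rel F F') (inl (bin F i)))
     (fun i => qproj (par_rel F F') (inl (bout F i))).

(* Positions (0-indexed)
   0..2k-1 of w = u v; the cyclic sequence (1,..,k,2k,..,k+1) becomes
   c_j = flip j, where flip j = j for j < k and 3k-1-j otherwise
   (flip is an involution on [0,2k)).  The rotation by r is
   rho_r(i) = c_((flip i + r) mod 2k), and C_k = {rho_r | r : nat}. *)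
Definition flip (m : nat) : nat := if m < k then m else (3 * k).-1 - m.

Definition rotk (r : nat) (j : 'I_(k + k)) : 'I_(k + k) :=
  insubd j (flip ((flip j + r) %% (k + k))).

Definition wlab (F : bgraph k) (j : 'I_(k + k)) : bV F :=
  match split j with inl i => bin F i | inr i => bout F i end.

Definition rot (r : nat) (F : bgraph k) : bgraph k :=
  @BG k (bV F) (bE F)
     (fun i => wlab F (rotk r (lshift k i)))
     (fun i => wlab F (rotk r (rshift k i))).

Definition contr_rel (F : bgraph k) (x y : bV F) : rel (bV F) :=
  fun a b => (a == x) && (b == y).
Arguments contr_rel F x y : clear implicits.

(* contraction of the edge xy (the resulting loop is removed) *)
Definition contract (F : bgraph k) (x y : bV F) : bgraph k :=
  @BG k (qT (contr_rel F x y))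
     (fun a b => (a != b) && imrel (@qproj _ (contr_rel F x y)) (bE F) a b)
     (fun i => qproj (contr_rel F x y) (bin F i))
     (fun i => qproj (contr_rel F x y) (bout F i)).

Definition deledge (F : bgraph k) (x y : bV F) : bgraph k :=
  @BG k (bV F)
     (fun a b => bE F a b && ~~ (((a == x) && (b == y)) || ((a == y) && (b == x))))
     (bin F) (bout F).

Definition delV (F : bgraph k) (x : bV F) : finType := {z : bV F | z != x}.

Definition delvertex (F : bgraph k) (x : bV F)
    (Hi : forall i, bin F i != x) (Ho : forall i, bout F i != x) : bgraph k :=
  @BG k (delV x)
     (fun a b => bE F (val a) (val b))
     (fun i => exist _ (bin F i) (Hi i))
     (fun i => exist _ (bout F i) (Ho i)).

Inductive bminor (F0 : bgraph k) : bgraph k -> Prop :=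
| bm_refl : bminor F0 F0
| bm_contract F x y : bminor F0 F -> bE F x y -> x != y -> bminor F0 (contract x y)
| bm_deledge F x y : bminor F0 F -> bE F x y -> bminor F0 (deledge x y)
| bm_delvertex F x Hi Ho : bminor F0 F -> bminor F0 (@delvertex F x Hi Ho).

End Ops.

(* the bilabelled graphs C_k and M_k on vertices 0..2k-1 (0-indexed),
   in-labels 0..k-1, out-labels k..2k-1 *)
Definition Ck_adj0 (k : nat) (a b : nat) : bool :=
  [|| (b == a.+1) && (a != k.-1) && (b < k + k),
      (a == 0) && (b == k) |
      (a == k.-1) && (b == (k + k).-1)].

Definition Ck (k : nat) : bgraph k :=
  @BG k ('I_(k + k) : finType)
     (fun a b => Ck_adj0 k a b || Ck_adj0 k b a)
     (fun i => lshift k i) (fun i => rshift k i).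

Definition Mk (k : nat) : bgraph k :=
  @BG k ('I_(k + k) : finType)
     (fun a b => (val b == val a + k) || (val a == val b + k))
     (fun i => lshift k i) (fun i => rshift k i).

Definition inQP (k : nat) (F : bgraph k) : Prop := bminor (Ck k) F.
Definition inQS (k : nat) (F : bgraph k) : Prop := bminor (Mk k) F.
Definition inQ (k : nat) (F : bgraph k) : Prop := inQP F \/ inQS F.

Inductive inP (k : nat) : bgraph k -> Prop :=
| P_Q F : inQ F -> inP F
| P_ser F F' : inP F -> inP F' -> inP (ser F F')
| P_par F Q : inP F -> inQP Q -> inP (par F Q)
| P_rot F r : inP F -> inP (rot r F).

Definition fk (k n : nat) : nat := 2 * k * 4 ^ (n ^ (2 * k)).

(* Main.v *)
Require Import Defs.
From mathcomp Require Import all_boot.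
From mathcomp Require Import all_algebra zify ring.
From Stdlib Require Import Classical.

Module Aux.
Set Implicit Arguments. Unset Strict Implicit. Unset Printing Implicit Defensive.
Import GRing.Theory Num.Theory.

Section Comb.
Variables (W : finType) (EW : rel W).

Definition homb (V : finType) (E : rel V) (f : {ffun V -> W}) : bool :=
  [forall x, forall y, E x y ==> EW (f x) (f y)].

Lemma hom_sumE (V : finType) (E : rel V) : Defs.hom E EW = \sum_(f : {ffun V -> W}) homb E f.
Proof.
rewrite /Defs.hom -sum1_card big_mkcond /=. apply: eq_bigr => f _.
by rewrite unfold_in /homb; case: ifP.
Qed.

Lemma partition_sum (A B : finType) (P : pred A) (a : A -> B) (h : B -> nat) :
  \sum_(p | P p) h (a p) = \sum_b h b * \sum_p (P p && (a p == b)).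
Proof.
rewrite (partition_big a predT) //=. apply: eq_bigr => b _.
rewrite big_mkcond /= big_distrr /=.
apply: eq_bigr => p _. case: (P p) => /=; last by rewrite muln0.
by case: eqP => [->|] /=; rewrite ?muln1 ?muln0.
Qed.

Lemma pair_partition (A1 A2 B1 B2 : finType) (P1 : pred A1) (P2 : pred A2)
  (a1 : A1 -> B1) (a2 : A2 -> B2) (c : B1 -> B2 -> nat) :
  \sum_(p | P1 p) \sum_(q | P2 q) c (a1 p) (a2 q) =
  \sum_b1 \sum_b2 c b1 b2 * (\sum_p (P1 p && (a1 p == b1)))
                         * (\sum_q (P2 q && (a2 q == b2))).
Proof.
under eq_bigr => p _ do rewrite (partition_sum P2 a2 (c (a1 p))).
have := partition_sum P1 a1
   (fun b1 => \sum_b2 c b1 b2 * \sum_q (P2 q && (a2 q == b2))).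
move=> /= ->.
apply: eq_bigr => b1 _. rewrite big_distrl /=. apply: eq_bigr => b2 _.
by rewrite mulnAC.
Qed.

Section Quot.
Variables (T : finType) (r : rel T).
Definition compat (g : {ffun T -> W}) : bool :=
  [forall x, forall y, r x y ==> (g x == g y)].
Definition qlift (f : {ffun qT r -> W}) : {ffun T -> W} := [ffun x => f (qproj r x)].
Definition qdown (g : {ffun T -> W}) : {ffun qT r -> W} := [ffun q => g (val q)].

Lemma qproj_val (q : qT r) : qproj r (val q) = q.
Proof. apply: val_inj => /=. by case: q => x /= /eqP. Qed.

Lemma qproj_eq x y : r x y -> qproj r x = qproj r y.
Proof.
move=> rxy; apply: val_inj => /=.
apply/(fingraph.rootP (sym_connect_sym (@symr_sym T r))).
by apply: connect1; rewrite /symr rxy.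
Qed.

Lemma compat_root g : compat g -> forall x, g (fingraph.root (symr r) x) = g x.
Proof.
move=> cg x.
have cl : closed (symr r) [pred z | g z == g x].
  move=> u v /orP [] H; rewrite /in_mem /=.
  - have := forallP (forallP cg u) v; rewrite H /= => /eqP E. by rewrite E.
  - have := forallP (forallP cg v) u; rewrite H /= => /eqP E. by rewrite E.
have := closed_connect cl (connect_root (symr r) x).
by rewrite !inE eqxx => /esym /eqP.
Qed.

Lemma quot_sum (Fn : {ffun T -> W} -> nat) :
  \sum_(f : {ffun qT r -> W}) Fn (qlift f) = \sum_(g | compat g) Fn g.
Proof.
symmetry; rewrite (reindex_onto qlift qdown) /=.
- apply: eq_bigl => f. apply/andP; split.
  + apply/forallP => x; apply/forallP => y; apply/implyP => rxy.
    by rewrite !ffunE (qproj_eq rxy).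
  + apply/eqP/ffunP => q. by rewrite !ffunE qproj_val.
- move=> g cg. apply/ffunP => x. rewrite !ffunE /=. exact: compat_root.
Qed.

Lemma homb_quot (E : rel T) (f : {ffun qT r -> W}) :
  homb (imrel (qproj r) E) f = homb E (qlift f).
Proof.
apply/forallP/forallP => H x.
- apply/forallP => y; apply/implyP => Exy. rewrite !ffunE.
  have /forallP/(_ (qproj r y))/implyP := H (qproj r x). apply.
  apply/existsP; exists x; apply/existsP; exists y. by rewrite Exy !eqxx.
- apply/forallP => y; apply/implyP => /existsP [x' /existsP [y' /and3P [E' /eqP <- /eqP <-]]].
  have /forallP/(_ y')/implyP := H x'. rewrite !ffunE. by apply.
Qed.
End Quot.

Section Split.
Variables (A B : finType).
Definition join (g1 : {ffun A -> W}) (g2 : {ffun B -> W}) : {ffun (A + B)%type -> W} :=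
  [ffun s => match s with inl a => g1 a | inr b => g2 b end].

Lemma split_sum (Fn : {ffun (A + B)%type -> W} -> nat) :
  \sum_g Fn g = \sum_g1 \sum_g2 Fn (join g1 g2).
Proof.
rewrite pair_bigA /=.
rewrite (reindex (fun p : {ffun A -> W} * {ffun B -> W} => join p.1 p.2)) //=.
exists (fun g => ([ffun a => g (inl a)], [ffun b => g (inr b)])) => [[g1 g2] _ | g _] /=.
- congr pair; apply/ffunP => ?; by rewrite !ffunE.
- apply/ffunP => [[a|b]]; by rewrite !ffunE.
Qed.
End Split.
End Comb.

Section Cnt.
Variables (k : nat) (W : finType) (EW : rel W).

Lemma wlab_l (F : bgraph k) i : wlab F (lshift k i) = bin F i.
Proof. by rewrite /wlab (unsplitK (inl i : 'I_k + 'I_k)). Qed.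
Lemma wlab_r (F : bgraph k) i : wlab F (rshift k i) = bout F i.
Proof. by rewrite /wlab (unsplitK (inr i : 'I_k + 'I_k)). Qed.

Definition lab (F : bgraph k) (f : {ffun bV F -> W}) : {ffun 'I_(k+k) -> W} :=
  [ffun j => f (wlab F j)].
Definition cnt (F : bgraph k) (w : {ffun 'I_(k+k) -> W}) : nat :=
  \sum_(f : {ffun bV F -> W}) (homb EW (bE F) f && (lab f == w)).

Lemma hom_cnt (F : bgraph k) : Defs.hom (bE F) EW = \sum_w cnt F w.
Proof.
rewrite hom_sumE.
transitivity (\sum_(f | homb EW (bE F) f) (fun _ => 1) (lab f)).
  by rewrite [RHS]big_mkcond /=; apply: eq_bigr => f _; case: ifP.
rewrite (partition_sum _ (@lab F) (fun _ => 1)). apply: eq_bigr => w _. by rewrite mul1n.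
Qed.

Lemma homb_join (F1 F2 : bgraph k) g1 g2 :
  homb EW (@sum_rel k F1 F2) (join g1 g2) = homb EW (bE F1) g1 && homb EW (bE F2) g2.
Proof.
apply/forallP/andP.
- move=> H; split; apply/forallP => x; apply/forallP => y; apply/implyP => e.
  + by have := forallP (H (inl x)) (inl y); rewrite /= e !ffunE.
  + by have := forallP (H (inr x)) (inr y); rewrite /= e !ffunE.
- case=> /forallP H1 /forallP H2 [x|x]; apply/forallP => [[y|y]] //=; rewrite !ffunE.
  + exact: (forallP (H1 x) y).
  + exact: (forallP (H2 x) y).
Qed.

Lemma comp_sum (F1 F2 : bgraph k) (r : rel (bV F1 + bV F2)%type)
   (sj : 'I_(k+k) -> (bV F1 + bV F2)%type)
   (cond : {ffun 'I_(k+k) -> W} -> {ffun 'I_(k+k) -> W} -> {ffun 'I_(k+k) -> W} -> bool)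
   (w : {ffun 'I_(k+k) -> W}) :
  (forall g1 g2, compat r (join g1 g2) && ([ffun j => join g1 g2 (sj j)] == w)
                 = cond w (lab g1) (lab g2)) ->
  \sum_(f : {ffun qT r -> W})
     (homb EW (imrel (qproj r) (@sum_rel k F1 F2)) f && ([ffun j => f (qproj r (sj j))] == w))
  = \sum_w1 \sum_w2 cond w w1 w2 * cnt F1 w1 * cnt F2 w2.
Proof.
move=> Hc.
pose Fn g := (homb EW (@sum_rel k F1 F2) g && ([ffun j => g (sj j)] == w)) : nat.
transitivity (\sum_(f : {ffun qT r -> W}) Fn (qlift f)).
  apply: eq_bigr => f _ /=. rewrite /Fn homb_quot. congr (nat_of_bool (_ && _)).
  congr (_ == w). apply/ffunP => j; by rewrite !ffunE.
rewrite (quot_sum r Fn) big_mkcond split_sum /= /Fn.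
transitivity (\sum_(g1 | homb EW (bE F1) g1) \sum_(g2 | homb EW (bE F2) g2)
                (cond w (lab g1) (lab g2) : nat)); last first.
  exact: (pair_partition (homb EW (bE F1)) (homb EW (bE F2)) (@lab F1) (@lab F2) (fun a b => cond w a b : nat)).
transitivity (\sum_g1 \sum_g2 ((homb EW (bE F1) g1 && homb EW (bE F2) g2 && cond w (lab g1) (lab g2)) : nat)).
  apply: eq_bigr => g1 _; apply: eq_bigr => g2 _.
  rewrite homb_join -Hc.
  by case: (compat _ _); case: (homb _ _ g1); case: (homb _ _ g2).
rewrite [RHS]big_mkcond; apply: eq_bigr => g1 _.
case: (homb EW (bE F1) g1) => /=; last by rewrite big1.
rewrite [RHS]big_mkcond; apply: eq_bigr => g2 _. by case: (homb EW (bE F2) g2).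
Qed.

Definition condser (w w1 w2 : {ffun 'I_(k+k) -> W}) : bool :=
  [forall i : 'I_k, [&& w1 (rshift k i) == w2 (lshift k i),
                        w1 (lshift k i) == w (lshift k i) &
                        w2 (rshift k i) == w (rshift k i)]].

Lemma cnt_ser (F1 F2 : bgraph k) w :
  cnt (ser F1 F2) w = \sum_w1 \sum_w2 condser w w1 w2 * cnt F1 w1 * cnt F2 w2.
Proof.
pose sj j : (bV F1 + bV F2)%type :=
  match split j with inl i => inl (bin F1 i) | inr i => inr (bout F2 i) end.
rewrite -(@comp_sum F1 F2 (@ser_rel k F1 F2) sj).
  rewrite /cnt. apply: eq_bigr => f _. congr (nat_of_bool (_ && (_ == w))).
  apply/ffunP => j; rewrite !ffunE /wlab /sj /=. by case: (split j).
move=> g1 g2. apply/andP/forallP.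
- case=> /forallP C /eqP Hw i.
  have := forallP (C (inl (bout F1 i))) (inr (bin F2 i)).
  have -> : @ser_rel k F1 F2 (inl (bout F1 i)) (inr (bin F2 i)).
    by apply/existsP; exists i; rewrite !eqxx.
  rewrite /= !ffunE /= => E1.
  rewrite !wlab_l !wlab_r E1 -Hw !ffunE /sj.
  rewrite (unsplitK (inl i : 'I_k + 'I_k)) (unsplitK (inr i : 'I_k + 'I_k)) /=.
  by rewrite !eqxx.
- move=> H; split.
  + apply/forallP => x; apply/forallP => y; apply/implyP => /existsP [i /andP [/eqP -> /eqP ->]].
    have /and3P [/eqP e _ _] := H i. rewrite /lab !ffunE wlab_r wlab_l in e. by rewrite !ffunE /= e.
  + apply/eqP/ffunP => j. rewrite -(splitK j). case: (split j) => i /=; rewrite ffunE /sj.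
    * rewrite (unsplitK (inl i : 'I_k + 'I_k)) ffunE.
      have /and3P [_ /eqP e _] := H i. by rewrite /lab ffunE wlab_l in e.
    * rewrite (unsplitK (inr i : 'I_k + 'I_k)) ffunE.
      have /and3P [_ _ /eqP e] := H i. by rewrite /lab ffunE wlab_r in e.
Qed.

Definition condpar (w w1 w2 : {ffun 'I_(k+k) -> W}) : bool := (w1 == w) && (w2 == w).

Lemma cnt_par (F1 F2 : bgraph k) w :
  cnt (par F1 F2) w = \sum_w1 \sum_w2 condpar w w1 w2 * cnt F1 w1 * cnt F2 w2.
Proof.
pose sj j : (bV F1 + bV F2)%type := inl (wlab F1 j).
rewrite -(@comp_sum F1 F2 (@par_rel k F1 F2) sj).
  rewrite /cnt. apply: eq_bigr => f _. congr (nat_of_bool (_ && (_ == w))).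
  apply/ffunP => j; rewrite !ffunE /wlab /sj /=. by rewrite /wlab; case: (split j).
move=> g1 g2.
have labE : [ffun j => join g1 g2 (sj j)] = lab g1.
  by apply/ffunP => j; rewrite !ffunE.
rewrite labE /condpar.
case: (lab g1 =P w) => [Hw|_]; last by rewrite andbF.
rewrite andbT /=.
apply/forallP/eqP.
- move=> C. rewrite -Hw. apply/ffunP => j. rewrite -(splitK j). case: (split j) => i /=.
  + have := forallP (C (inl (bin F1 i))) (inr (bin F2 i)).
    have -> : @par_rel k F1 F2 (inl (bin F1 i)) (inr (bin F2 i)).
      by apply/existsP; exists i; rewrite !eqxx.
    by rewrite /= !ffunE !wlab_l => /eqP ->.
  + have := forallP (C (inl (bout F1 i))) (inr (bout F2 i)).
    have -> : @par_rel k F1 F2 (inl (bout F1 i)) (inr (bout F2 i)).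
      by apply/existsP; exists i; rewrite !eqxx orbT.
    by rewrite /= !ffunE !wlab_r => /eqP ->.
- move=> E x; apply/forallP => y; apply/implyP => /existsP [i /orP [] /andP [/eqP -> /eqP ->]].
  + have e : lab g1 (lshift k i) = lab g2 (lshift k i) by rewrite Hw E.
    rewrite !ffunE !wlab_l in e. by rewrite !ffunE /= e.
  + have e : lab g1 (rshift k i) = lab g2 (rshift k i) by rewrite Hw E.
    rewrite !ffunE !wlab_r in e. by rewrite !ffunE /= e.
Qed.

Lemma wlab_rot (F : bgraph k) r j : wlab (Defs.rot r F) j = wlab F (rotk r j).
Proof.
rewrite /wlab -{2}(splitK j). case: (split j) => i /=.
- by [].
- by [].
Qed.

Lemma cnt_rot (F : bgraph k) r w :
  cnt (Defs.rot r F) w = \sum_(w1 : {ffun 'I_(k+k) -> W}) ([ffun j => w1 (rotk r j)] == w) * cnt F w1.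
Proof.
rewrite /cnt.
transitivity (\sum_(f | homb EW (bE F) f) (fun w1 : {ffun 'I_(k+k) -> W} => ([ffun j => w1 (rotk r j)] == w) : nat) (lab f)).
  rewrite [RHS]big_mkcond; apply: eq_bigr => f _ /=.
  have -> : lab (F:=Defs.rot r F) f = [ffun j => @lab F f (rotk r j)].
    by apply/ffunP => j; rewrite !ffunE wlab_rot.
  by case: (homb _ _ _).
by rewrite (partition_sum _ (@lab F) (fun w1 : {ffun 'I_(k+k) -> W} => ([ffun j => w1 (rotk r j)] == w) : nat)).
Qed.
End Cnt.

Section Size.
Variable k : nat.

Lemma card_qT (T : finType) (r : rel T) : #|qT r| <= #|T|.
Proof. by rewrite /qT card_sig max_card. Qed.

Lemma card_ser (F1 F2 : bgraph k) : #|bV (ser F1 F2)| <= #|bV F1| + #|bV F2|.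
Proof. rewrite -card_sum. exact: card_qT. Qed.

Lemma card_par (F1 F2 : bgraph k) : #|bV (par F1 F2)| <= #|bV F1| + #|bV F2|.
Proof. rewrite -card_sum. exact: card_qT. Qed.

Lemma bminor_card (F0 F : bgraph k) : bminor F0 F -> #|bV F| <= #|bV F0|.
Proof.
elim=> //=.
- move=> F1 x y _ H _ _. apply: leq_trans H. exact: card_qT.
- move=> F1 x Hi Ho _ H. apply: leq_trans H. by rewrite /delV card_sig max_card.
Qed.

Lemma inQ_card (F : bgraph k) : inQ F -> #|bV F| <= k + k.
Proof.
case=> H; have := bminor_card H; by rewrite /= card_ord.
Qed.

Lemma inQP_card (F : bgraph k) : inQP F -> #|bV F| <= k + k.
Proof. move=> H; apply: inQ_card; by left. Qed.

Fixpoint L (d : nat) (F : bgraph k) : Prop :=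
  match d with
  | 0 => inQ F
  | d'.+1 => L d' F
      \/ (exists F1 F2, L d' F1 /\ L d' F2 /\ F = ser F1 F2)
      \/ (exists F1 Q, L d' F1 /\ inQP Q /\ F = par F1 Q)
      \/ (exists F1 r, L d' F1 /\ F = Defs.rot r F1)
  end.

Lemma L_mono d d' F : d <= d' -> L d F -> L d' F.
Proof.
elim: d' => [|d' IH].
- by rewrite leqn0 => /eqP ->.
- rewrite leq_eqVlt => /orP [/eqP -> //|lt] H /=. left. exact: IH.
Qed.

Lemma inP_L F : inP F -> exists d, L d F.
Proof.
elim.
- move=> F0 H. by exists 0.
- move=> F1 F2 _ [d1 H1] _ [d2 H2]. exists (maxn d1 d2).+1 => /=. right; left.
  exists F1, F2. split; [|split] => //.
  + exact: (L_mono (leq_maxl _ _) H1).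
  + exact: (L_mono (leq_maxr _ _) H2).
- move=> F1 Q _ [d1 H1] HQ. exists d1.+1 => /=. right; right; left. by exists F1, Q.
- move=> F1 r _ [d1 H1]. exists d1.+1 => /=. right; right; right. by exists F1, r.
Qed.

Lemma L_inP d F : L d F -> inP F.
Proof.
elim: d F => [|d IH] F /=.
- by move=> H; apply: P_Q.
- case=> [H|[[F1 [F2 [H1 [H2 ->]]]]|[[F1 [Q [H1 [HQ ->]]]]|[F1 [r [H1 ->]]]]]].
  + exact: IH.
  + apply: P_ser; exact: IH.
  + apply: P_par => //; exact: IH.
  + apply: P_rot; exact: IH.
Qed.

Lemma aux1 a b c t : 1 <= t -> a <= c * t -> b <= c * t -> a + b <= c * (2 * t).
Proof. nia. Qed.
Lemma aux2 a b c t : 1 <= t -> a <= c * t -> b <= c -> a + b <= c * (2 * t).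
Proof. nia. Qed.

Lemma L_card d F : L d F -> #|bV F| <= (k + k) * 2 ^ d.
Proof.
elim: d F => [|d IH] F /=.
- by rewrite muln1; apply: inQ_card.
- have t1 : 1 <= 2 ^ d by rewrite expn_gt0.
  rewrite expnS.
  case=> [H|[[F1 [F2 [H1 [H2 ->]]]]|[[F1 [Q [H1 [HQ ->]]]]|[F1 [r [H1 ->]]]]]].
  + have := IH _ H. move=> h; apply: (leq_trans h); apply: leq_mul => //; by rewrite leq_pmull.
  + apply: (leq_trans (card_ser F1 F2)). exact: aux1 t1 (IH _ H1) (IH _ H2).
  + apply: (leq_trans (card_par F1 Q)). exact: aux2 t1 (IH _ H1) (inQP_card HQ).
  + have := IH _ H1. rewrite /=. set t := 2 ^ d in t1 *. nia.
Qed.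
End Size.

Section Vec.
Local Open Scope ring_scope.
Variables (k : nat) (VG VH : finType) (EG : rel VG) (EH : rel VH).

Local Notation X := ({ffun 'I_(k+k) -> VG} + {ffun 'I_(k+k) -> VH})%type.
Local Notation D := #|{: X}|.
Local Notation vT := 'rV[rat]_D.

Definition cntX (F : bgraph k) (x : X) : nat :=
  match x with inl w => cnt EG F w | inr w => cnt EH F w end.

Definition vec (F : bgraph k) : vT := \row_i (cntX F (enum_val i))%:R.

Lemma sumX (f : X -> rat) : \sum_(i < D) f (enum_val i) = \sum_x f x.
Proof. by rewrite -big_enum_val. Qed.


Definition Blin (c : X -> X -> X -> nat) (x y : vT) : vT :=
  \row_i \sum_j \sum_l (c (enum_val i) (enum_val j) (enum_val l))%:R * x 0 j * y 0 l.
Definition Ulin (c : X -> X -> nat) (x : vT) : vT :=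
  \row_i \sum_j (c (enum_val i) (enum_val j))%:R * x 0 j.

Lemma vec_bil c (C F1 F2 : bgraph k) :
  (forall x, cntX C x = (\sum_a \sum_b c x a b * cntX F1 a * cntX F2 b)%N) ->
  vec C = Blin c (vec F1) (vec F2).
Proof.
move=> H; apply/rowP => i; rewrite !mxE H natr_sum -sumX.
apply: eq_bigr => j _. rewrite natr_sum -sumX. apply: eq_bigr => l _.
by rewrite !mxE !natrM.
Qed.

Lemma vec_lin c (C F : bgraph k) :
  (forall x, cntX C x = (\sum_a c x a * cntX F a)%N) -> vec C = Ulin c (vec F).
Proof.
move=> H; apply/rowP => i; rewrite !mxE H natr_sum -sumX.
apply: eq_bigr => j _. by rewrite !mxE !natrM.
Qed.

Lemma Blin_l c y a u v : Blin c (a *: u + v) y = a *: Blin c u y + Blin c v y.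
Proof.
apply/rowP => i; rewrite !mxE mulr_sumr -big_split; apply: eq_bigr => j _ /=.
rewrite mulr_sumr -big_split; apply: eq_bigr => l _ /=. rewrite !mxE. ring.
Qed.

Lemma Blin_r c x a u v : Blin c x (a *: u + v) = a *: Blin c x u + Blin c x v.
Proof.
apply/rowP => i; rewrite !mxE mulr_sumr -big_split; apply: eq_bigr => j _ /=.
rewrite mulr_sumr -big_split; apply: eq_bigr => l _ /=. rewrite !mxE. ring.
Qed.

Lemma Ulin_l c a u v : Ulin c (a *: u + v) = a *: Ulin c u + Ulin c v.
Proof.
apply/rowP => i; rewrite !mxE mulr_sumr -big_split; apply: eq_bigr => j _ /=.
rewrite !mxE. ring.
Qed.

Lemma span_ind (P : vT -> Prop) (s : seq vT) :
  P 0 -> (forall a u v, P u -> P v -> P (a *: u + v)) ->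
  (forall u, u \in s -> P u) -> forall v, v \in <<s>>%VS -> P v.
Proof.
move=> P0 Pc; elim: s => [|u s IH] Ps v.
- by rewrite span_nil memv0 => /eqP ->.
- rewrite span_cons => /memv_addP [y /vlineP [a ->] [z zs ->]].
  apply: Pc; first by apply: Ps; rewrite mem_head.
  apply: IH => // w ws; apply: Ps; by rewrite in_cons ws orbT.
Qed.

Lemma span_img (f : vT -> vT) s v :
  (forall a u w, f (a *: u + w) = a *: f u + f w) ->
  v \in <<s>>%VS -> f v \in <<map f s>>%VS.
Proof.
move=> fl; apply: (span_ind (P := fun v => f v \in <<map f s>>%VS)).
- have := fl (-1) 0 0. rewrite scaler0 addr0 scaleN1r addNr => ->. exact: mem0v.
- move=> a u w Hu Hw. rewrite fl. apply: memvD => //; exact: memvZ.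
- move=> u us. apply: memv_span. exact: map_f.
Qed.

Lemma mem_map_In (g : bgraph k -> vT) (s : seq (bgraph k)) u :
  u \in map g s -> exists F, List.In F s /\ u = g F.
Proof.
elim: s => [|F s IH] //=. rewrite in_cons => /orP [/eqP ->|H].
- by exists F; split => //; left.
- case: (IH H) => F' [H1 H2]. exists F'; split => //; by right.
Qed.

Definition Sp d (v : vT) := exists s : seq (bgraph k),
  (forall F, List.In F s -> L d F) /\ v \in <<map vec s>>%VS.

Lemma Sp_span d (Y : seq vT) v : (forall u, u \in Y -> Sp d u) -> v \in <<Y>>%VS -> Sp d v.
Proof.
move=> HY; apply: (span_ind (P := Sp d)) => //.
- exists [::]; split => //. exact: mem0v.
- move=> a u w [s1 [H1 m1]] [s2 [H2 m2]]. exists (s1 ++ s2); split.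
  + move=> F HF; case: (List.in_app_or _ _ _ HF) => ?; [exact: H1|exact: H2].
  + rewrite map_cat span_cat. apply: memv_add => //. exact: memvZ.
Qed.


Definition cX3 (c : forall W : finType, {ffun 'I_(k+k) -> W} -> {ffun 'I_(k+k) -> W} ->
                   {ffun 'I_(k+k) -> W} -> bool) (x a b : X) : nat :=
  match x, a, b with
  | inl w, inl w1, inl w2 => c _ w w1 w2
  | inr w, inr w1, inr w2 => c _ w w1 w2
  | _, _, _ => 0%N
  end.

Lemma cX3_sum (c : forall W : finType, {ffun 'I_(k+k) -> W} -> {ffun 'I_(k+k) -> W} ->
                   {ffun 'I_(k+k) -> W} -> bool) (C F1 F2 : bgraph k) :
  (forall (W : finType) (EW : rel W) w,
     cnt EW C w = (\sum_w1 \sum_w2 c W w w1 w2 * cnt EW F1 w1 * cnt EW F2 w2)%N) ->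
  forall x, cntX C x = (\sum_a \sum_b cX3 c x a b * cntX F1 a * cntX F2 b)%N.
Proof.
move=> H [w|w] /=; rewrite H big_sumType /=.
- rewrite [RHS]addnC [in RHS]big1 ?add0n; last by move=> a _; rewrite big1 // => -[] b _.
  apply: eq_bigr => w1 _; rewrite big_sumType /= [RHS]addnC [in RHS]big1 ?add0n //.
- rewrite [in RHS]big1 ?add0n; last by move=> a _; rewrite big1 // => -[] b _.
  apply: eq_bigr => w1 _; rewrite big_sumType /= [in RHS]big1 ?add0n //.
Qed.

Definition cS := cX3 (fun W => @condser k W).
Definition cP := cX3 (fun W => @condpar k W).
Definition cR (r : nat) (x a : X) : nat :=
  match x, a with
  | inl w, inl w1 => [ffun j => w1 (rotk r j)] == w
  | inr w, inr w1 => [ffun j => w1 (rotk r j)] == w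
  | _, _ => 0%N
  end.

Lemma vec_ser F1 F2 : vec (ser F1 F2) = Blin cS (vec F1) (vec F2).
Proof. apply: vec_bil. apply: cX3_sum => W EW w. exact: cnt_ser. Qed.

Lemma vec_par F1 F2 : vec (par F1 F2) = Blin cP (vec F1) (vec F2).
Proof. apply: vec_bil. apply: cX3_sum => W EW w. exact: cnt_par. Qed.

Lemma vec_rot r F : vec (Defs.rot r F) = Ulin (cR r) (vec F).
Proof.
apply: vec_lin => -[w|w] /=; rewrite cnt_rot big_sumType /=.
- by rewrite [RHS]addnC [in RHS]big1 ?add0n.
- by rewrite [in RHS]big1 ?add0n.
Qed.

Definition phi (v : vT) : rat :=
  \sum_i (match enum_val i with inl _ => 1 | inr _ => -1 end) * v 0 i.

Lemma phi_lin a u v : phi (a *: u + v) = a * phi u + phi v.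
Proof.
rewrite /phi mulr_sumr -big_split; apply: eq_bigr => i _ /=. rewrite !mxE. ring.
Qed.

Lemma phi_vec F : phi (vec F) = (Defs.hom (bE F) EG)%:R - (Defs.hom (bE F) EH)%:R.
Proof.
rewrite /phi.
under eq_bigr do rewrite mxE.
rewrite (sumX (fun x => (match x with inl _ => 1 | inr _ => -1 end) * (cntX F x)%:R)).
rewrite big_sumType /= !hom_cnt !natr_sum -sumrN.
congr (_ + _); apply: eq_bigr => w _; by rewrite ?mul1r ?mulN1r.
Qed.

Lemma stable d : (forall F, L d.+1 F -> Sp d (vec F)) ->
  forall m F, L m F -> Sp d (vec F).
Proof.
move=> Hst; elim=> [|m IH] F /=.
- move=> H; apply: Hst. exact: (L_mono (leq0n _) H).
- case=> [H|[[F1 [F2 [H1 [H2 ->]]]]|[[F1 [Q [H1 [HQ ->]]]]|[F1 [r [H1 ->]]]]]].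
  + exact: IH.
  + rewrite vec_ser. case: (IH _ H1) => s1 [Hs1 m1].
    apply: (@Sp_span _ (map (fun u => Blin cS u (vec F2)) (map vec s1))); last first.
      apply: span_img m1 => a u w; exact: Blin_l.
    move=> u; rewrite -map_comp => /mem_map_In [A [InA ->]] /=.
    case: (IH _ H2) => s2 [Hs2 m2].
    apply: (@Sp_span _ (map (Blin cS (vec A)) (map vec s2))); last first.
      apply: span_img m2 => a u' w; exact: Blin_r.
    move=> u'; rewrite -map_comp => /mem_map_In [B [InB ->]] /=.
    rewrite -vec_ser. apply: Hst. right; left. exists A, B.
    split; [exact: Hs1|split; [exact: Hs2|by []]].
  + rewrite vec_par. case: (IH _ H1) => s1 [Hs1 m1].
    apply: (@Sp_span _ (map (fun u => Blin cP u (vec Q)) (map vec s1))); last first.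
      apply: span_img m1 => a u w; exact: Blin_l.
    move=> u; rewrite -map_comp => /mem_map_In [A [InA ->]] /=.
    rewrite -vec_par. apply: Hst. right; right; left. exists A, Q.
    split; [exact: Hs1|split; [exact: HQ|by []]].
  + rewrite vec_rot. case: (IH _ H1) => s1 [Hs1 m1].
    apply: (@Sp_span _ (map (Ulin (cR r)) (map vec s1))); last first.
      apply: span_img m1 => a u w; exact: Ulin_l.
    move=> u; rewrite -map_comp => /mem_map_In [A [InA ->]] /=.
    rewrite -vec_rot. apply: Hst. right; right; right. exists A, r.
    split; [exact: Hs1|by []].
Qed.

Lemma dimD (U : {vspace vT}) : (\dim U <= D)%N.
Proof.
have := dimvS (subvf U). by rewrite dimvf /dim /= mul1n.
Qed.

Lemma exists_stable : exists d, (d <= D)%N /\ forall F, L d.+1 F -> Sp d (vec F).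
Proof.
apply: NNPP => Hn.
have Hc : forall d, (d <= D)%N -> exists F, L d.+1 F /\ ~ Sp d (vec F).
  move=> d hd. apply: NNPP => H2. apply: Hn. exists d; split => // F HF.
  apply: NNPP => H3. apply: H2. by exists F.
suff : forall d, (d <= D.+1)%N -> exists s : seq (bgraph k),
    (forall F, List.In F s -> L d F) /\ (d <= \dim <<map vec s>>%VS)%N.
  move=> /(_ D.+1 (leqnn _)) [s [_ hs]].
  have := dimD <<map vec s>>%VS. by rewrite leqNgt hs.
elim=> [|d IH] hd.
- by exists [::].
- have [s [Hs hs]] := IH (ltnW hd).
  have [F [HF nS]] := Hc d hd.
  have nin : vec F \notin <<map vec s>>%VS.
    apply/negP => m; apply: nS; by exists s.
  exists (F :: s); split.
  + move=> F' [<-|H] //. exact: (L_mono (leqnSn d) (Hs _ H)).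
  + have sub : (<<map vec s>> <= <<map vec (F :: s)>>)%VS by rewrite /= span_cons addvSr.
    have := ltn_leqif (dimv_leqif_sup sub).
    have -> : ~~ (<<map vec (F :: s)>> <= <<map vec s>>)%VS.
      apply/negP => VU. apply: (negP nin). apply: (subvP VU). apply: memv_span. exact: mem_head.
    move=> lt. exact: (leq_ltn_trans hs lt).
Qed.

End Vec.

End Aux.
Import Aux.
Import GRing.Theory Num.Theory.
Import Defs.
Unset Implicit Arguments.

Lemma size_bound (k n : nat) (VG VH : finType) d :
  1 <= k -> #|VG| <= n -> #|VH| <= n ->
  d <= #|{: ({ffun 'I_(k+k) -> VG} + {ffun 'I_(k+k) -> VH})%type}| ->
  (k + k) * 2 ^ d <= fk k n.
Proof.
move=> k1 hG hH hd.
have e : k + k = 2 * k by rewrite addnn mul2n.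
have hD : #|{: ({ffun 'I_(k+k) -> VG} + {ffun 'I_(k+k) -> VH})%type}| <= 2 * n ^ (2 * k).
  rewrite card_sum !card_ffun !card_ord -e mul2n -addnn.
  have k2 : 0 < k + k by rewrite addn_gt0 k1.
  by apply: leq_add; rewrite leq_exp2r.
rewrite /fk e leq_mul2l; apply/orP; right.
have -> : 4 = 2 ^ 2 by [].
rewrite -expnM leq_exp2l //. exact: leq_trans hd hD.
Qed.

Theorem theorem5p5 (k n : nat) (VG VH : finType) (EG : rel VG) (EH : rel VH) :
  1 <= k ->
  symmetric EG -> irreflexive EG -> #|VG| <= n ->
  symmetric EH -> irreflexive EH -> #|VH| <= n ->
  (forall F : bgraph k, inP F -> hom (bE F) EG = hom (bE F) EH) <->
  (forall F : bgraph k, inP F -> #|bV F| <= fk k n ->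
     hom (bE F) EG = hom (bE F) EH).
Proof.
move=> k1 _ _ hG _ _ hH. split.
- move=> H F HF _; exact: H.
- move=> Hs F HF.
  have [d [hd Hst]] := @exists_stable k VG VH EG EH.
  have [m Hm] := inP_L HF.
  have [s [Hsl mF]] := stable Hst Hm.
  have : phi (vec EG EH F) = 0%R.
    apply: (span_ind (P := fun v => phi v = 0%R)) mF.
    - rewrite /phi big1 // => i _. by rewrite mxE GRing.mulr0.
    - move=> a u v hu hv. by rewrite phi_lin hu hv GRing.mulr0 GRing.addr0.
    - move=> u /mem_map_In [A [InA ->]]. rewrite phi_vec.
      have HA := Hsl _ InA.
      rewrite Hs ?GRing.subrr //; first exact: L_inP HA.
      apply: leq_trans (L_card HA) _. exact: (@size_bound k n VG VH d k1 hG hH hd).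
  rewrite phi_vec => /eqP. rewrite GRing.subr_eq0 eqr_nat => /eqP //.
Qed.
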